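(* Let $(M,\varphi,\xi_\alpha,\eta^\alpha,g)$ be an indefinite $\mathcal{S}$-manifold, $\varepsilon=\sum_{\alpha=1}^r\varepsilon_\alpha$, and $P(X,Y;Z,W)=\Phi(X,Z)g(Y,W)-\Phi(X,W)g(Y,Z)-\Phi(Y,Z)g(X,W)+\Phi(Y,W)g(X,Z)$. Let $T$ and $S$ be $(0,4)$-tensor fields on $M$ such that, for $U\in\{T,S\}$: (i) $U(X,Y,Z,W)=-U(Y,X,Z,W)$ for all vector fields $X,Y,Z,W$; (ii) $U(X,Y,Z,W)=-U(X,Y,W,Z)$ for all $X,Y,Z,W$; (iii) $U(X,Y,Z,W)=U(Z,W,X,Y)$ for all $X,Y,Z,W$; (iv) $U(X,Y,Z,W)+U(X,Z,W,Y)+U(X,W,Y,Z)=0$ for all $X,Y,Z,W$; (v) $U(X,Y,\varphi Z,W)+U(X,Y,Z,\varphi W)=\varepsilon P(X,Y;Z,W)$ for all $X,Y,Z,W\in\Gamma(\mathfrak{D})$; and moreover, for all $X,Y\in\Gamma(\mathfrak{D})$ and all $\alpha,\beta,\gamma,\delta\in\{1,\dots,r\}$: (vi)(a) $T(X,\xi_\alpha,X,Y)=S(X,\xi_\alpha,X,Y)$; (b) $T(\xi_\alpha,X,\xi_\beta,Y)=S(\xi_\alpha,X,\xi_\beta,Y)$; (c) $T(\xi_\alpha,X,\xi_\beta,\xi_\gamma)=S(\xi_\alpha,X,\xi_\beta,\xi_\gamma)$; (d) $T(\xi_\alpha,\xi_\beta,\xi_\gamma,\xi_\delta)=S(\xi_\alpha,\xi_\beta,\xi_\gamma,\xi_\delta)$.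 If $T(X,\varphi X,X,\varphi X)=S(X,\varphi X,X,\varphi X)$ for every non-lightlike vector field $X\in\Gamma(\mathfrak{D})$, then $T=S$.
   Context: Let $M$ be a smooth manifold of dimension $2n+r$. An indefinite metric $g.f.f$-structure $(\varphi,\xi_\alpha,\eta^\alpha,g)$, $\alpha=1,\dots,r$, on $M$ consists of a $(1,1)$-tensor field $\varphi$ of constant rank with $\varphi^3+\varphi=0$, vector fields $\xi_1,\dots,\xi_r$, $1$-forms $\eta^1,\dots,\eta^r$ and a semi-Riemannian metric $g$ of index $\nu$, $0<\nu<2n+r$, such that $\varphi^2=-I+\sum_\alpha\eta^\alpha\otimes\xi_\alpha$, $\eta^\alpha(\xi_\beta)=\delta^\alpha_\beta$, $g(\varphi X,\varphi Y)=g(X,Y)-\sum_\alpha\varepsilon_\alpha\eta^\alpha(X)\eta^\alpha(Y)$ and $\varepsilon_\alpha g(X,\xi_\alpha)=\eta^\alpha(X)$ for all $X,Y$, where $\varepsilon_\alpha=g(\xi_\alpha,\xi_\alpha)\in\{1,-1\}$. $\mathfrak{D}=\operatorname{Im}\varphi$. The fundamental $2$-form is $\Phi(X,Y)=g(X,\varphi Y)$; exterior derivative convention $d\omega(X,Y)=\tfrac12(X(\omega(Y))-Y(\omega(X))-\omega([X,Y]))$. With $N_\varphi(X,Y)=\varphi^2[X,Y]+[\varphi X,\varphi Y]-\varphi[\varphi X,Y]-\varphi[X,\varphi Y]$ and $N=N_\varphi+2\sum_\alpha d\eta^\alpha\otimes\xi_\alpha$, an indefinite $\mathcal{S}$-manifold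 is one with $d\eta^\alpha=\Phi$ for all $\alpha$ and $N=0$. A vector $X$ is lightlike if $g(X,X)=0$. *)

(* Defs.v *)
(* Pointwise (tangent-space) formalization. *)
From HB Require Import structures.
From mathcomp Require Import all_boot all_order all_algebra.
Set Implicit Arguments. Unset Strict Implicit. Unset Printing Implicit Defensive.
Import Order.TTheory GRing.Theory Num.Theory.
Local Open Scope ring_scope.

Definition app {R : realFieldType} {m : nat} (phi : 'M[R]_m) (x : 'rV[R]_m) : 'rV[R]_m :=
  x *m phi.

Definition bil {R : realFieldType} {m : nat} (G : 'M[R]_m) (x y : 'rV[R]_m) : R :=
  (x *m G *m y^T) 0 0.

Definition form {R : realFieldType} {m : nat} (e : 'cV[R]_m) (x : 'rV[R]_m) : R :=
  (x *m e) 0 0.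

Definition eps {R : realFieldType} {m r : nat} (G : 'M[R]_m) (xi : 'I_r -> 'rV[R]_m)
  (a : 'I_r) : R := bil G (xi a) (xi a).

Definition Phi {R : realFieldType} {m : nat} (phi G : 'M[R]_m) (x y : 'rV[R]_m) : R :=
  bil G x (app phi y).

Definition indef_metric_gff {R : realFieldType} (n r : nat)
  (phi : 'M[R]_(2 * n + r)) (xi : 'I_r -> 'rV[R]_(2 * n + r))
  (eta : 'I_r -> 'cV[R]_(2 * n + r)) (G : 'M[R]_(2 * n + r)) : Prop :=
  (* g symmetric, nondegenerate, of index nu with 0 < nu < 2n+r *)
      G^T = G /\ G \in unitmx /\
      (exists nu : nat, (0 < nu < 2 * n + r)%N /\
         (exists U : 'M[R]_(nu, 2 * n + r), row_free U /\
            forall c : 'rV[R]_nu, c != 0 -> bil G (c *m U) (c *m U) < 0) /\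
         (forall U : 'M[R]_(nu.+1, 2 * n + r), row_free U ->
            exists c : 'rV[R]_nu.+1, c != 0 /\ 0 <= bil G (c *m U) (c *m U))) /\
      (* phi^3 + phi = 0, constant rank is automatic pointwise *)
      (forall x, app phi (app phi (app phi x)) + app phi x = 0) /\
      (forall x, app phi (app phi x) = - x + \sum_(a < r) form (eta a) x *: xi a) /\
      (forall a b : 'I_r, form (eta a) (xi b) = (a == b)%:R) /\
      (forall x y, bil G (app phi x) (app phi y) =
         bil G x y - \sum_(a < r) eps G xi a * form (eta a) x * form (eta a) y) /\
      (forall a, eps G xi a = 1 \/ eps G xi a = -1) /\
      (forall a x, eps G xi a * bil G x (xi a) = form (eta a) x).

Definition inD {R : realFieldType} {m : nat} (phi : 'M[R]_m) (x : 'rV[R]_m) : Prop :=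
  exists y, x = app phi y.

Definition multilinear4 {R : realFieldType} {m : nat}
  (U : 'rV[R]_m -> 'rV[R]_m -> 'rV[R]_m -> 'rV[R]_m -> R) : Prop :=
  [/\ (forall (c : R) x x' y z w, U (c *: x + x') y z w = c * U x y z w + U x' y z w),
      (forall (c : R) x y y' z w, U x (c *: y + y') z w = c * U x y z w + U x y' z w),
      (forall (c : R) x y z z' w, U x y (c *: z + z') w = c * U x y z w + U x y z' w) &
      (forall (c : R) x y z w w', U x y z (c *: w + w') = c * U x y z w + U x y z w')].

Definition Ptens {R : realFieldType} {m : nat} (phi G : 'M[R]_m) (x y z w : 'rV[R]_m) : R :=
  Phi phi G x z * bil G y w - Phi phi G x w * bil G y z
  - Phi phi G y z * bil G x w + Phi phi G y w * bil G x z.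

Definition curv_like {R : realFieldType} (n r : nat)
  (phi : 'M[R]_(2 * n + r)) (xi : 'I_r -> 'rV[R]_(2 * n + r)) (G : 'M[R]_(2 * n + r))
  (U : 'rV[R]_(2 * n + r) -> 'rV[R]_(2 * n + r) -> 'rV[R]_(2 * n + r) ->
       'rV[R]_(2 * n + r) -> R) : Prop :=
  [/\ (forall x y z w, U x y z w = - U y x z w),
      (forall x y z w, U x y z w = - U x y w z),
      (forall x y z w, U x y z w = U z w x y),
      (forall x y z w, U x y z w + U x z w y + U x w y z = 0) &
      (forall x y z w, inD phi x -> inD phi y -> inD phi z -> inD phi w ->
         U x y (app phi z) w + U x y z (app phi w) =
         (\sum_(a < r) eps G xi a) * Ptens phi G x y z w)].

(* Main.v *)
Require Import Defs.
From mathcomp Require Import all_boot all_order all_algebra.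
Import Order.TTheory GRing.Theory Num.Theory.
Local Open Scope ring_scope.
From mathcomp Require Import ring lra.
From Stdlib Require Import Classical FunctionalExtensionality.
Set Implicit Arguments. Unset Strict Implicit. Unset Printing Implicit Defensive.


Lemma poly_all_zero (R : realFieldType) (p : {poly R}) :
  (forall t, p.[t] = 0) -> p = 0.
Proof.
move=> H; apply/eqP; apply/negPn/negP => pn0.
pose rs : seq R := [seq i%:R | i <- iota 0 (size p)].
have H1 : all (root p) rs by apply/allP => x /mapP [i _ ->]; rewrite /root H.
have H2 : uniq rs.
  rewrite map_inj_uniq ?iota_uniq // => i j /eqP; rewrite eqr_nat => /eqP.
  done.
by have := max_poly_roots pn0 H1 H2; rewrite size_map size_iota ltnn.
Qed.

Lemma PL (R : realFieldType) (c0 c1 c2 c3 c4 d0 d1 d2 : R) :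
  d2 != 0 ->
  (forall t, d0 + d1 * t + d2 * t ^+ 2 != 0 ->
     c0 + c1 * t + c2 * t ^+ 2 + c3 * t ^+ 3 + c4 * t ^+ 4 = 0) ->
  c0 = 0 /\ c2 = 0.
Proof.
move=> d2n0 H.
pose p : {poly R} := c0%:P + c1%:P * 'X + c2%:P * 'X^2 + c3%:P * 'X^3 + c4%:P * 'X^4.
pose q : {poly R} := d0%:P + d1%:P * 'X + d2%:P * 'X^2.
have hp t : p.[t] = c0 + c1 * t + c2 * t ^+ 2 + c3 * t ^+ 3 + c4 * t ^+ 4.
  by rewrite /p !hornerE.
have hq t : q.[t] = d0 + d1 * t + d2 * t ^+ 2 by rewrite /q !hornerE.
have pq0 : p * q = 0.
  apply: poly_all_zero => t; rewrite hornerM hp hq.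
  have [e|ne] := eqVneq (d0 + d1 * t + d2 * t ^+ 2) 0; first by rewrite e mulr0.
  by rewrite (H t ne) mul0r.
have qn0 : q != 0.
  apply/eqP => q0; have : q`_2 = 0 by rewrite q0 coef0.
  rewrite /q !coefE /= mulr0 mulr1 !add0r => h; by rewrite h eqxx in d2n0.
have p0 : p = 0.
  by move/eqP: pq0; rewrite mulf_eq0 (negbTE qn0) orbF => /eqP.
have h0 : p`_0 = 0 by rewrite p0 coef0.
have h2 : p`_2 = 0 by rewrite p0 coef0.
by move: h0 h2; rewrite /p !coefE /= => h0 h2; split; [move: h0|move: h2]; rewrite ?mulr0 ?mulr1 ?add0r ?addr0.
Qed.


Section Lin.
Variables (R : realFieldType) (m : nat).
Implicit Types (x y z w : 'rV[R]_m) (c : R).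

Definition Lin (f : 'rV[R]_m -> R) := forall c x x', f (c *: x + x') = c * f x + f x'.

Lemma Lin0 f : Lin f -> f 0 = 0.
Proof. move=> H; have := H 1 0 0; rewrite scale1r addr0 mul1r => e; lra. Qed.
Lemma LinD f : Lin f -> forall x x', f (x + x') = f x + f x'.
Proof. by move=> H x x'; rewrite -{1}(scale1r x) H mul1r. Qed.
Lemma LinZ f : Lin f -> forall c x, f (c *: x) = c * f x.
Proof. by move=> H c x; rewrite -(addr0 (c *: x)) H (Lin0 H) addr0. Qed.
Lemma LinN f : Lin f -> forall x, f (- x) = - f x.
Proof. by move=> H x; rewrite -scaleN1r LinZ // mulN1r. Qed.
Lemma Lin_sum f (r : nat) (cs : 'I_r -> R) (v : 'I_r -> 'rV[R]_m) : Lin f ->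
  f (\sum_(a < r) cs a *: v a) = \sum_(a < r) cs a * f (v a).
Proof.
move=> H; rewrite (big_morph f (LinD H) (Lin0 H)); apply: eq_bigr => a _.
by rewrite LinZ.
Qed.

Section ML.
Variable U : 'rV[R]_m -> 'rV[R]_m -> 'rV[R]_m -> 'rV[R]_m -> R.
Hypothesis HU : multilinear4 U.
Lemma ml1 y z w : Lin (fun x => U x y z w). Proof. by case: HU => h _ _ _ c x x'; apply: h. Qed.
Lemma ml2 x z w : Lin (fun y => U x y z w). Proof. by case: HU => _ h _ _ c y y'; apply: h. Qed.
Lemma ml3 x y w : Lin (fun z => U x y z w). Proof. by case: HU => _ _ h _ c z z'; apply: h. Qed.
Lemma ml4 x y z : Lin (fun w => U x y z w). Proof. by case: HU => _ _ _ h c w w'; apply: h. Qed.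
Lemma mlD1 x x' y z w : U (x + x') y z w = U x y z w + U x' y z w.
Proof. exact: (LinD (ml1 y z w)). Qed.
Lemma mlD2 x y y' z w : U x (y + y') z w = U x y z w + U x y' z w.
Proof. exact: (LinD (ml2 x z w)). Qed.
Lemma mlD3 x y z z' w : U x y (z + z') w = U x y z w + U x y z' w.
Proof. exact: (LinD (ml3 x y w)). Qed.
Lemma mlD4 x y z w w' : U x y z (w + w') = U x y z w + U x y z w'.
Proof. exact: (LinD (ml4 x y z)). Qed.
Lemma mlZ1 c x y z w : U (c *: x) y z w = c * U x y z w.
Proof. exact: (LinZ (ml1 y z w)). Qed.
Lemma mlZ2 c x y z w : U x (c *: y) z w = c * U x y z w.
Proof. exact: (LinZ (ml2 x z w)). Qed.
Lemma mlZ3 c x y z w : U x y (c *: z) w = c * U x y z w.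
Proof. exact: (LinZ (ml3 x y w)). Qed.
Lemma mlZ4 c x y z w : U x y z (c *: w) = c * U x y z w.
Proof. exact: (LinZ (ml4 x y z)). Qed.
Lemma mlN1 x y z w : U (- x) y z w = - U x y z w.
Proof. exact: (LinN (ml1 y z w)). Qed.
Lemma mlN2 x y z w : U x (- y) z w = - U x y z w.
Proof. exact: (LinN (ml2 x z w)). Qed.
Lemma mlN3 x y z w : U x y (- z) w = - U x y z w.
Proof. exact: (LinN (ml3 x y w)). Qed.
Lemma mlN4 x y z w : U x y z (- w) = - U x y z w.
Proof. exact: (LinN (ml4 x y z)). Qed.
Lemma ml01 y z w : U 0 y z w = 0. Proof. exact: (Lin0 (ml1 y z w)). Qed.

Lemma expand4 x y t :
  U (x + t *: y) (x + t *: y) (x + t *: y) (x + t *: y) =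
  U x x x x + (U y x x x + U x y x x + U x x y x + U x x x y) * t
  + (U y y x x + U y x y x + U y x x y + U x y y x + U x y x y + U x x y y) * t ^+ 2
  + (U x y y y + U y x y y + U y y x y + U y y y x) * t ^+ 3
  + U y y y y * t ^+ 4.
Proof.
rewrite !mlD1 !mlD2 !mlD3 !mlD4 !mlZ1 !mlZ2 !mlZ3 !mlZ4; ring.
Qed.
End ML.

Lemma ml_sub (T S : 'rV[R]_m -> 'rV[R]_m -> 'rV[R]_m -> 'rV[R]_m -> R) :
  multilinear4 T -> multilinear4 S ->
  multilinear4 (fun x y z w => T x y z w - S x y z w).
Proof.
case=> t1 t2 t3 t4 [s1 s2 s3 s4]; split => *;
by rewrite ?t1 ?t2 ?t3 ?t4 ?s1 ?s2 ?s3 ?s4; ring.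
Qed.

Lemma appD (phi : 'M[R]_m) x y : app phi (x + y) = app phi x + app phi y.
Proof. by rewrite /app mulmxDl. Qed.
Lemma appZ (phi : 'M[R]_m) c x : app phi (c *: x) = c *: app phi x.
Proof. by rewrite /app scalemxAl. Qed.
Lemma appN (phi : 'M[R]_m) x : app phi (- x) = - app phi x.
Proof. by rewrite /app mulNmx. Qed.
Lemma app0 (phi : 'M[R]_m) : app phi 0 = 0.
Proof. by rewrite /app mul0mx. Qed.

Lemma formL (e : 'cV[R]_m) : Lin (Defs.form e).
Proof. by move=> c x x'; rewrite /Defs.form mulmxDl -scalemxAl !mxE. Qed.

Lemma bilL2 (G : 'M[R]_m) x : Lin (bil G x).
Proof.
move=> c y y'; rewrite /bil linearD linearZ /= mulmxDr -scalemxAr !mxE //.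
Qed.
Lemma bilL1 (G : 'M[R]_m) y : Lin (bil G ^~ y).
Proof. by move=> c x x'; rewrite /bil !mulmxDl -!scalemxAl !mxE. Qed.
Lemma bil_sym (G : 'M[R]_m) x y : G^T = G -> bil G y x = bil G x y.
Proof.
move=> Hs; rewrite /bil.
have -> : (y *m G *m x^T) 0 0 = ((y *m G *m x^T)^T) 0 0 by rewrite [RHS]mxE.
by rewrite !trmx_mul trmxK Hs mulmxA.
Qed.
End Lin.


Section Geo.
Variables (R : realFieldType) (n r : nat).
Local Notation m := (2 * n + r)%N.
Variables (phi : 'M[R]_m) (xi : 'I_r -> 'rV[R]_m) (eta : 'I_r -> 'cV[R]_m) (G : 'M[R]_m).
Hypotheses (Hs : G^T = G) (Hu : G \in unitmx)
 (H3 : forall x, app phi (app phi (app phi x)) + app phi x = 0)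
 (H2 : forall x, app phi (app phi x) = - x + \sum_(a < r) Defs.form (eta a) x *: xi a)
 (Hex : forall a b : 'I_r, Defs.form (eta a) (xi b) = (a == b)%:R)
 (Heps : forall a, eps G xi a = 1 \/ eps G xi a = -1)
 (Hepsb : forall a x, eps G xi a * bil G x (xi a) = Defs.form (eta a) x).

Lemma inD_app x : inD phi (app phi x). Proof. by exists x. Qed.
Lemma inD_add x y : inD phi x -> inD phi y -> inD phi (x + y).
Proof. by case=> x' -> [y' ->]; exists (x' + y'); rewrite appD. Qed.
Lemma inD_scale c x : inD phi x -> inD phi (c *: x).
Proof. by case=> x' ->; exists (c *: x'); rewrite appZ. Qed.
Lemma inD_opp x : inD phi x -> inD phi (- x).
Proof. by case=> x' ->; exists (- x'); rewrite appN. Qed.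

Lemma phi2D x : inD phi x -> app phi (app phi x) = - x.
Proof. by case=> y ->; move: (H3 y) => /eqP; rewrite addr_eq0 => /eqP. Qed.

Lemma phi_xi a : app phi (xi a) = 0.
Proof.
have h2 : app phi (app phi (xi a)) = 0.
  rewrite H2 (bigD1 a) //= Hex eqxx scale1r big1 ?addr0 ?addNr // => b nb.
  by rewrite Hex (negbTE nb) scale0r.
by move: (H3 (xi a)); rewrite h2 app0 add0r.
Qed.

Lemma eta_D a x : inD phi x -> Defs.form (eta a) x = 0.
Proof.
case=> y ->.
have e : \sum_(b < r) Defs.form (eta b) (app phi y) *: xi b = 0.
  move: (H2 (app phi y)) (H3 y) => ->; rewrite addrC => /eqP.
  by rewrite addrA subrr add0r => /eqP.
have := congr1 (Defs.form (eta a)) e.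
rewrite Lin_sum; last exact: formL.
move=> h.
have f0 : Defs.form (eta a) 0 = 0 by rewrite /Defs.form mul0mx mxE.
rewrite f0 (bigD1 a) //= Hex eqxx mulr1 big1 ?addr0 in h; first exact: h.
by move=> b nb; rewrite Hex eq_sym (negbTE nb) mulr0.
Qed.

Lemma decomp u : u = app phi (- app phi u) + \sum_(a < r) Defs.form (eta a) u *: xi a.
Proof. by rewrite appN H2 opprD opprK subrK. Qed.

Lemma Lin_zero f : Lin f -> (forall x, inD phi x -> f x = 0) -> (forall a, f (xi a) = 0) ->
  forall u, f u = 0.
Proof.
move=> Hf hD hxi u; rewrite (decomp u) (LinD Hf) (hD _ (inD_app _)) add0r (Lin_sum _ _ Hf).
by rewrite big1 // => a _; rewrite hxi mulr0.
Qed.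

Lemma bil_D_xi x a : inD phi x -> bil G x (xi a) = 0.
Proof.
move=> hx; have := Hepsb a x; rewrite eta_D //.
by case: (Heps a) => ->; rewrite ?mul1r ?mulN1r // => /eqP; rewrite oppr_eq0 => /eqP.
Qed.

Lemma null_D : (forall y, inD phi y -> bil G y y = 0) -> forall x, inD phi x -> x = 0.
Proof.
move=> Hn x hx.
have hb : forall w, bil G x w = 0.
  apply: Lin_zero; first exact: bilL2.
  - move=> d hd; have := Hn _ (inD_add hx hd).
    rewrite (LinD (bilL1 _ _)) !(LinD (bilL2 _ _)) Hn // Hn // (bil_sym _ _ Hs) => e; lra.
  - by move=> a; apply: bil_D_xi.
have xG : x *m G = 0.
  apply/rowP => j; move: (hb (delta_mx 0 j)); rewrite /bil trmx_delta -colE !mxE.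
  by move=> ->.
by rewrite -(mulmxK Hu x) xG mul0mx.
Qed.

Section Curv.
Variable A : 'rV[R]_m -> 'rV[R]_m -> 'rV[R]_m -> 'rV[R]_m -> R.
Hypotheses (HA : multilinear4 A)
 (Ha1 : forall x y z w, A x y z w = - A y x z w)
 (Ha2 : forall x y z w, A x y z w = - A x y w z)
 (Ha3 : forall x y z w, A x y z w = A z w x y)
 (Ha4 : forall x y z w, A x y z w + A x z w y + A x w y z = 0)
 (Ha5 : forall x y z w, inD phi x -> inD phi y -> inD phi z -> inD phi w ->
         A x y (app phi z) w + A x y z (app phi w) = 0)
 (Hva : forall x y a, inD phi x -> inD phi y -> A x (xi a) x y = 0)
 (Hvb : forall x y a b, inD phi x -> inD phi y -> A (xi a) x (xi b) y = 0)
 (Hvc : forall x a b c, inD phi x -> A (xi a) x (xi b) (xi c) = 0)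
 (Hvd : forall a b c d, A (xi a) (xi b) (xi c) (xi d) = 0)
 (HQ : forall x, inD phi x -> bil G x x != 0 -> A x (app phi x) x (app phi x) = 0).

Let F := fun a b c d => A a (app phi b) c (app phi d).
Lemma HF : multilinear4 F.
Proof.
case: HA => h1 h2 h3 h4; split.
- by move=> c x x' y z w; rewrite /F h1.
- by move=> c x y y' z w; rewrite /F appD appZ h2.
- by move=> c x y z z' w; rewrite /F h3.
- by move=> c x y z w w'; rewrite /F appD appZ h4.
Qed.

Lemma bil_quad x y t : bil G (x + t *: y) (x + t *: y) =
  bil G x x + (bil G x y + bil G y x) * t + bil G y y * t ^+ 2.
Proof.
rewrite (LinD (bilL1 _ _)) !(LinD (bilL2 _ _)) (LinZ (bilL1 _ _)) !(LinZ (bilL2 _ _)).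
rewrite (LinZ (bilL1 _ _)); ring.
Qed.

Lemma Q0 x : inD phi x -> F x x x x = 0.
Proof.
move=> hx.
case: (classic (exists y, inD phi y /\ bil G y y != 0)) => [[y [hy ny]]|no].
  have [] // := @PL R (F x x x x) (F y x x x + F x y x x + F x x y x + F x x x y) (F y y x x + F y x y x + F y x x y + F x y y x + F x y x y + F x x y y) (F x y y y + F y x y y + F y y x y + F y y y x) (F y y y y)
    (bil G x x) (bil G x y + bil G y x) _ ny.
  move=> t nt; rewrite -(expand4 HF).
  by apply: HQ; [apply: inD_add => //; apply: inD_scale | rewrite bil_quad].
have x0 : x = 0.
  apply: null_D => // z hz; apply/eqP/negPn/negP => nz; apply: no; by exists z.
by rewrite x0 /F (ml01 HA).
Qed.

Lemma FS2 a b : inD phi a -> inD phi b ->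
  F b b a a + F b a b a + F b a a b + F a b b a + F a b a b + F a a b b = 0.
Proof.
move=> ha hb.
have [] // := @PL R (F a a a a) (F b a a a + F a b a a + F a a b a + F a a a b) (F b b a a + F b a b a + F b a a b + F a b b a + F a b a b + F a a b b) (F a b b b + F b a b b + F b b a b + F b b b a) (F b b b b) 1 0 1 (oner_neq0 _).
move=> t _; rewrite -(expand4 HF).
by apply: Q0; apply: inD_add => //; apply: inD_scale.
Qed.

Lemma J2 x y z w : inD phi x -> inD phi y -> inD phi z -> inD phi w ->
  A (app phi x) y z w = - A x (app phi y) z w.
Proof.
move=> hx hy hz hw; rewrite Ha3 [A x _ _ _]Ha3.
have := Ha5 hz hw hx hy; lra.
Qed.

Lemma key a b : inD phi a -> inD phi b -> A a b a b + 3 * A a (app phi b) a (app phi b) = 0.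
Proof.
move=> ha hb.
have pa := inD_app a; have pb := inD_app b.
have := FS2 ha hb; rewrite /F.
have r1 := Ha3 b (app phi b) a (app phi a).
have r2 := Ha5 ha pb hb ha.
have r2' := Ha2 a (app phi b) (app phi b) a.
have r3 := Ha3 b (app phi a) a (app phi b).
have r4 := Ha1 b (app phi a) b (app phi a).
have r4' := J2 ha hb hb pa.
have bi := Ha4 a (app phi a) b (app phi b).
have b1 := Ha2 a b (app phi b) (app phi a).
have b2 := Ha5 ha hb ha pb.
have b3 := Ha2 a (app phi b) (app phi a) b.
rewrite phi2D // (mlN4 HA) in b2.
lra.
Qed.

Lemma sect a b : inD phi a -> inD phi b -> A a b a b = 0.
Proof.
move=> ha hb; have k1 := key ha hb; have k2 := key ha (inD_app b).
rewrite phi2D // (mlN2 HA) (mlN4 HA) in k2; lra.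
Qed.

Lemma dddd a b c d : inD phi a -> inD phi b -> inD phi c -> inD phi d -> A a b c d = 0.
Proof.
have s1 : forall a b c, inD phi a -> inD phi b -> inD phi c -> A a b c b = 0.
  move=> x y z hx hy hz; have := sect (inD_add hx hz) hy.
  rewrite (mlD1 HA) !(mlD3 HA) !sect // (Ha3 z y x y); lra.
have s2 : forall a b c d, inD phi a -> inD phi b -> inD phi c -> inD phi d ->
    A a b c d + A a d c b = 0.
  move=> x y z w hx hy hz hw; have := s1 _ _ _ hx (inD_add hy hw) hz.
  rewrite (mlD2 HA) !(mlD4 HA) !s1 //; lra.
move=> ha hb hc hd.
have := Ha4 a b c d.
have := s2 _ _ _ _ ha hc hd hb; have := Ha2 a b d c.
have := s2 _ _ _ _ ha hd hb hc; have := Ha2 a c b d.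
have := Ha2 a c d b.
lra.
Qed.

Lemma x2 x a z w : inD phi x -> inD phi z -> inD phi w -> A x (xi a) z w = 0.
Proof.
move=> hx hz hw.
have anti : forall p q y, inD phi p -> inD phi q -> inD phi y ->
    A p (xi a) q y = - A q (xi a) p y.
  move=> p q y hp hq hy; have := Hva a (inD_add hp hq) hy.
  rewrite (mlD1 HA) !(mlD3 HA) !Hva //; lra.
have := Ha4 (xi a) x z w.
rewrite (Ha1 (xi a) x) (Ha1 (xi a) z) (Ha1 (xi a) w).
have := anti _ _ w hx hz hw; have := anti _ _ x hz hw hx; have := anti _ _ z hw hx hz.
have := Ha2 x (xi a) z w; have := Ha2 z (xi a) w x; have := Ha2 w (xi a) x z.
have := Ha2 z (xi a) x w; have := Ha2 w (xi a) z x; have := Ha2 x (xi a) w z.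
lra.
Qed.
Lemma x1 x a z w : inD phi x -> inD phi z -> inD phi w -> A (xi a) x z w = 0.
Proof. by move=> *; rewrite Ha1 x2 ?oppr0. Qed.
Lemma x3 x y a w : inD phi x -> inD phi y -> inD phi w -> A x y (xi a) w = 0.
Proof. by move=> *; rewrite Ha3 x1. Qed.
Lemma x4 x y z a : inD phi x -> inD phi y -> inD phi z -> A x y z (xi a) = 0.
Proof. by move=> *; rewrite Ha2 x3 ?oppr0. Qed.

Lemma xx12 a b x y : inD phi x -> inD phi y -> A (xi a) (xi b) x y = 0.
Proof.
move=> hx hy; have := Ha4 (xi a) (xi b) x y.
rewrite (Ha2 (xi a) x y) (Hvb a b hx hy) (Hvb a b hy hx); lra.
Qed.
Lemma xx34 a b x y : inD phi x -> inD phi y -> A x y (xi a) (xi b) = 0.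
Proof. by move=> *; rewrite Ha3 xx12. Qed.
Lemma xx14 a b x y : inD phi x -> inD phi y -> A (xi a) x y (xi b) = 0.
Proof. by move=> *; rewrite Ha2 Hvb ?oppr0. Qed.
Lemma xx23 a b x y : inD phi x -> inD phi y -> A x (xi a) (xi b) y = 0.
Proof. by move=> *; rewrite Ha1 Hvb ?oppr0. Qed.
Lemma xx24 a b x y : inD phi x -> inD phi y -> A x (xi a) y (xi b) = 0.
Proof. by move=> *; rewrite Ha1 xx14 ?oppr0. Qed.

Lemma xxx1 a b c x : inD phi x -> A x (xi a) (xi b) (xi c) = 0.
Proof. by move=> *; rewrite Ha1 Hvc ?oppr0. Qed.
Lemma xxx3 a b c x : inD phi x -> A (xi a) (xi b) x (xi c) = 0.
Proof. by move=> *; rewrite Ha3 xxx1. Qed.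
Lemma xxx4 a b c x : inD phi x -> A (xi a) (xi b) (xi c) x = 0.
Proof. by move=> *; rewrite Ha3 Hvc. Qed.

Definition kind (k : 'rV[R]_m) := inD phi k \/ exists a, k = xi a.

Lemma all0 k1 k2 k3 k4 : kind k1 -> kind k2 -> kind k3 -> kind k4 -> A k1 k2 k3 k4 = 0.
Proof.
case=> [h1|[a ->]]; case=> [h2|[b ->]]; case=> [h3|[c ->]]; case=> [h4|[d ->]].
all: first [ exact: dddd | exact: x1 | exact: x2 | exact: x3 | exact: x4
  | exact: xx12 | exact: xx34 | exact: xx14 | exact: xx23 | exact: xx24 | exact: Hvb
  | exact: xxx1 | exact: xxx3 | exact: xxx4 | exact: Hvc | exact: Hvd ].
Qed.

Lemma A0 u v w z : A u v w z = 0.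
Proof.
have kD x : inD phi x -> kind x by left.
have kx a : kind (xi a) by right; exists a.
have L4 : forall k1 k2 k3 z, kind k1 -> kind k2 -> kind k3 -> A k1 k2 k3 z = 0.
  move=> k1 k2 k3 z' h1 h2 h3; apply: (Lin_zero (f := A k1 k2 k3)) => //.
  - exact: (ml4 HA).
  - by move=> x hx; apply: all0 => //; apply: kD.
  - by move=> a; apply: all0.
have L3 : forall k1 k2 w z, kind k1 -> kind k2 -> A k1 k2 w z = 0.
  move=> k1 k2 w' z' h1 h2; apply: (Lin_zero (f := fun t => A k1 k2 t z')) => //.
  - exact: (ml3 HA).
  - by move=> x hx; apply: L4 => //; apply: kD.
  - by move=> a; apply: L4.
have L2 : forall k1 v w z, kind k1 -> A k1 v w z = 0.
  move=> k1 v' w' z' h1; apply: (Lin_zero (f := fun t => A k1 t w' z')) => //.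
  - exact: (ml2 HA).
  - by move=> x hx; apply: L3 => //; apply: kD.
  - by move=> a; apply: L3.
apply: (Lin_zero (f := fun t => A t v w z)).
- exact: (ml1 HA).
- by move=> x hx; apply: L2; apply: kD.
- by move=> a; apply: L2.
Qed.
End Curv.
End Geo.

Unset Implicit Arguments.
Set Strict Implicit.
Theorem mainTheorem16 (R : realFieldType) (n r : nat)
  (phi : 'M[R]_(2 * n + r)) (xi : 'I_r -> 'rV[R]_(2 * n + r))
  (eta : 'I_r -> 'cV[R]_(2 * n + r)) (G : 'M[R]_(2 * n + r))
  (T S : 'rV[R]_(2 * n + r) -> 'rV[R]_(2 * n + r) -> 'rV[R]_(2 * n + r) ->
         'rV[R]_(2 * n + r) -> R) :
  indef_metric_gff phi xi eta G ->
  multilinear4 T -> multilinear4 S ->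
  curv_like phi xi G T -> curv_like phi xi G S ->
  (forall x y a, inD phi x -> inD phi y -> T x (xi a) x y = S x (xi a) x y) ->
  (forall x y a b, inD phi x -> inD phi y -> T (xi a) x (xi b) y = S (xi a) x (xi b) y) ->
  (forall x a b c, inD phi x -> T (xi a) x (xi b) (xi c) = S (xi a) x (xi b) (xi c)) ->
  (forall a b c d, T (xi a) (xi b) (xi c) (xi d) = S (xi a) (xi b) (xi c) (xi d)) ->
  (forall x, inD phi x -> bil G x x != 0 ->
     T x (app phi x) x (app phi x) = S x (app phi x) x (app phi x)) ->
  T = S.
Proof.
move=> Hg HT HS CT CS va vb vc vd hq.
case: Hg => Hs [Hu [_ [H3 [H2 [Hex [_ [Heps Hepsb]]]]]]].
case: CT => t1 t2 t3 t4 t5; case: CS => s1 s2 s3 s4 s5.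
apply: functional_extensionality => x; apply: functional_extensionality => y.
apply: functional_extensionality => z; apply: functional_extensionality => w.
apply/eqP; rewrite -subr_eq0; apply/eqP.
pose A := fun x y z w => T x y z w - S x y z w.
have HA : multilinear4 A by apply: ml_sub.
have := @A0 R n r phi xi eta G Hs Hu H3 H2 Hex Heps Hepsb A HA; apply.
- by move=> *; rewrite /A t1 s1; ring.
- by move=> *; rewrite /A t2 s2; ring.
- by move=> *; rewrite /A t3 s3.
- by move=> x0 y0 z0 w0; rewrite /A; have := t4 x0 y0 z0 w0; have := s4 x0 y0 z0 w0; lra.
- move=> x0 y0 z0 w0 h1 h2 h3 h4; rewrite /A.
  have := t5 _ _ _ _ h1 h2 h3 h4; have := s5 _ _ _ _ h1 h2 h3 h4; lra.
- by move=> *; rewrite /A va ?subrr.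
- by move=> *; rewrite /A vb ?subrr.
- by move=> *; rewrite /A vc ?subrr.
- by move=> *; rewrite /A vd ?subrr.
- by move=> *; rewrite /A hq ?subrr.
Qed.
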